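(* Let $n_0,n_1$ be positive integers and $r>1$ an integer. A subset $\mathcal{Z}\subseteq\{1,2,\dots,r-1\}$ is admissible for $(n_0,n_1,r)$ if and only if there exists a pair of integer sequences $(y_\ell)_{\ell\ge0},(z_\ell)_{\ell\ge0}$ satisfying: (C1) $y_\ell\le n_0y_{\ell-1}+n_1z_{\ell-1}$ and $z_\ell\le n_1y_{\ell-1}+n_0z_{\ell-1}$ for every $\ell\ge1$; (C2) $y_{r-1}+z_{r-1}>0$; (C3) $y_\ell=z_\ell=0$ for $\ell\ge r$; (C4) $y_0=1$ and $z_0=0$; (C5) $\min\{y_\ell,z_\ell\}<0$ if and only if $\ell\in\mathcal{Z}$.
   Context: For integers $n,\ell>0$ and a finite-support integer sequence $\mu=(\mu_i)_{i\ge1}$, $\mathsf{K}_\ell(\mu,n)=n^\ell-\sum_{i=1}^{\ell}\mu_i n^{\ell-i}$ (with $0^0=1$). For a pair $(\eta,\omega)$ of nonnegative integer sequences $(\eta_\ell)_{\ell\ge1},(\omega_\ell)_{\ell\ge1}$ with finite support, let $\mathsf{K}^\pm_\ell=\mathsf{K}_\ell(\eta\pm\omega,n_0\pm n_1)$, let $\mathsf{r}(\eta,\omega)$ be the largest index in the union of their supports, and $\mathsf{K}^\pm=\mathsf{K}^\pm_{\mathsf{r}(\eta,\omega)}$. A subset $\mathcal{Z}\subseteq\{1,\dots,r-1\}$ is admissible for $(n_0,n_1,r)$ if there exists such a pair $(\eta,\omega)$ with $\mathsf{r}(\eta,\omega)=r$ and $\mathsf{K}^+=\mathsf{K}^-=0$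 such that, for $\ell\in\{1,\dots,r-1\}$, the inequality $\mathsf{K}^+_\ell\ge|\mathsf{K}^-_\ell|$ fails exactly when $\ell\in\mathcal{Z}$. *)

(* Defs.v *)
From mathcomp Require Import all_boot all_order all_algebra.
Set Implicit Arguments. Unset Strict Implicit. Unset Printing Implicit Defensive.
Import Order.TTheory GRing.Theory Num.Theory.
Local Open Scope ring_scope.

(* Sequences (mu_i)_{i>=1} are modelled as functions nat -> _ ; the value at
   index 0 is never used. *)

(* K_l(mu, n) = n^l - sum_{i=1}^{l} mu_i n^(l-i)   (0^0 = 1 in MathComp) *)
Definition K (l : nat) (mu : nat -> int) (n : int) : int :=
  n ^+ l - \sum_(1 <= i < l.+1) mu i * n ^+ (l - i).

Definition fin_supp (s : nat -> nat) : Prop :=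
  exists N : nat, forall i : nat, (N < i)%N -> s i = 0%N.

Definition rank_is (eta omega : nat -> nat) (r : nat) : Prop :=
  (0 < r)%N /\ (eta r <> 0%N \/ omega r <> 0%N) /\
  (forall i : nat, (r < i)%N -> eta i = 0%N /\ omega i = 0%N).

Definition Kplus (eta omega : nat -> nat) (n0 n1 : nat) (l : nat) : int :=
  K l (fun i => (eta i)%:Z + (omega i)%:Z) (n0%:Z + n1%:Z).

Definition Kminus (eta omega : nat -> nat) (n0 n1 : nat) (l : nat) : int :=
  K l (fun i => (eta i)%:Z - (omega i)%:Z) (n0%:Z - n1%:Z).

Definition admissible (n0 n1 r : nat) (Z : {pred nat}) : Prop :=
  (forall l : nat, l \in Z -> (1 <= l <= r.-1)%N) /\
  exists eta omega : nat -> nat,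
    [/\ fin_supp eta /\ fin_supp omega, rank_is eta omega r,
        Kplus eta omega n0 n1 r = 0, Kminus eta omega n0 n1 r = 0 &
        forall l : nat, (1 <= l <= r.-1)%N ->
          (~ (`|Kminus eta omega n0 n1 l| <= Kplus eta omega n0 n1 l) <-> l \in Z)].

(* Main.v *)
Require Import Defs.
From mathcomp Require Import all_boot all_order all_algebra.
From mathcomp Require Import zify ring.
Import Order.TTheory GRing.Theory Num.Theory.
Local Open Scope ring_scope.

Lemma K0 mu n : K 0 mu n = 1.
Proof. by rewrite /K big_geq // subr0 expr0. Qed.

Lemma KS l mu n : K l.+1 mu n = n * K l mu n - mu l.+1.
Proof.
rewrite /K big_nat_recr //= subnn expr0 mulr1 mulrBr exprS opprD addrA; congr (_ - _ - _).
rewrite mulr_sumr; apply: eq_big_nat => i /andP[_ Hi].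
by rewrite subSn // exprS mulrCA.
Qed.

Lemma minlt (a b : int) : (Num.min a b < 0) <-> ~ (`|a - b| <= a + b).
Proof.
rewrite gt_min ler_norml; split.
- move=> /orP H /andP[H1 H2]; lia.
- move=> H; apply/orP; case: (ltP a 0); first by left.
  case: (ltP b 0); first by right.
  move=> hb ha; exfalso; apply: H; apply/andP; split; lia.
Qed.

Fixpoint yz (eta omega : nat -> nat) (n0 n1 : nat) (l : nat) : int * int :=
  match l with
  | 0%N => (1, 0)
  | l'.+1 => let p := yz eta omega n0 n1 l' in
     (n0%:Z * p.1 + n1%:Z * p.2 - (eta l)%:Z, n1%:Z * p.1 + n0%:Z * p.2 - (omega l)%:Z)
  end.

Lemma K_yz eta omega n0 n1 l :
  Kplus eta omega n0 n1 l = (yz eta omega n0 n1 l).1 + (yz eta omega n0 n1 l).2 /\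
  Kminus eta omega n0 n1 l = (yz eta omega n0 n1 l).1 - (yz eta omega n0 n1 l).2.
Proof.
rewrite /Kplus /Kminus; elim: l => [|l [IH1 IH2]]; first by rewrite !K0.
rewrite !KS IH1 IH2 /=; split; ring.
Qed.

Theorem lemma4 (n0 n1 r : nat) (Z : {pred nat}) :
  (0 < n0)%N -> (0 < n1)%N -> (1 < r)%N ->
  (forall l : nat, l \in Z -> (1 <= l <= r.-1)%N) ->
  (admissible n0 n1 r Z <->
   exists y z : nat -> int,
     [/\ (forall l : nat, (1 <= l)%N ->
            y l <= n0%:Z * y l.-1 + n1%:Z * z l.-1 /\
            z l <= n1%:Z * y l.-1 + n0%:Z * z l.-1),
         0 < y r.-1 + z r.-1,
         (forall l : nat, (r <= l)%N -> y l = 0 /\ z l = 0),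
         y 0%N = 1 /\ z 0%N = 0 &
         (forall l : nat, (Num.min (y l) (z l) < 0) <-> l \in Z)]).
Proof.
move=> hn0 hn1 hr HZ; split.
- move=> [_ [eta [omega [[_ _] [_ [Hr Hbig]] Kp Km HK]]]].
  exists (fun l => (yz eta omega n0 n1 l).1), (fun l => (yz eta omega n0 n1 l).2).
  have Hr0 : (yz eta omega n0 n1 r).1 = 0 /\ (yz eta omega n0 n1 r).2 = 0.
    have [A B] := K_yz eta omega n0 n1 r; rewrite Kp in A; rewrite Km in B; lia.
  have Hge : forall l, (r <= l)%N -> (yz eta omega n0 n1 l).1 = 0 /\ (yz eta omega n0 n1 l).2 = 0.
    elim=> [|l IH] Hl; first lia.
    case: (ltngtP r l.+1) => H; [|lia|by rewrite -H].
    have [E1 E2] := Hbig _ H; have [I1 I2] := IH H.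
    by rewrite /= I1 I2 E1 E2 !mulr0 !addr0 ?subr0 /=; rewrite ?subr0.
  split => //.
  + case=> [|l] // _ /=; split; lia.
  + case: r hr Hr0 Hr {Hge HK Kp Km Hbig HZ} => [|r'] // _ /= [A B] Hr.
    have H : (0 < (eta r'.+1)%:Z + (omega r'.+1)%:Z) by case: Hr; lia.
    nia.
  + move=> l; case: (leqP r l) => Hl.
    * have [A B] := Hge l Hl; rewrite A B minxx ltxx; split=> // /HZ; lia.
    * case: l Hl => [|l] Hl.
        rewrite /= ltNge le_min lexx ler01 /=; split=> // /HZ; lia.
      have [A B] := K_yz eta omega n0 n1 l.+1.
      rewrite minlt -A -B HK //; lia.
- move=> [y [z [C1 C2 C3 [C40 C41] C5]]].
  pose eta := fun l : nat => `|(n0%:Z * y l.-1 + n1%:Z * z l.-1 - y l)%R|%N.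
  pose omega := fun l : nat => `|(n1%:Z * y l.-1 + n0%:Z * z l.-1 - z l)%R|%N.
  have Heta : forall l, (1 <= l)%N -> (eta l)%:Z = n0%:Z * y l.-1 + n1%:Z * z l.-1 - y l.
    move=> l Hl; rewrite /eta abszE ger0_norm //; have [] := C1 l Hl; lia.
  have Homega : forall l, (1 <= l)%N -> (omega l)%:Z = n1%:Z * y l.-1 + n0%:Z * z l.-1 - z l.
    move=> l Hl; rewrite /omega abszE ger0_norm //; have [] := C1 l Hl; lia.
  have Hyz : forall l, yz eta omega n0 n1 l = (y l, z l).
    elim=> [|l IH]; first by rewrite /= C40 C41.
    by rewrite /= IH /= Heta // Homega //; congr pair; ring.
  have Hbig : forall i, (r < i)%N -> eta i = 0%N /\ omega i = 0%N.
    move=> i Hi; have [A B] := C3 i (ltnW Hi); have [A' B'] := C3 i.-1 (ltac:(lia) : (r <= i.-1)%N).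
    rewrite /eta /omega A B A' B' !mulr0 !addr0 /=; split; lia.
  split => //; exists eta, omega; split.
  + by split; exists r => i /Hbig [].
  + split; first lia; split => //.
    have := Heta r (ltnW hr); have := Homega r (ltnW hr).
    have [A B] := C3 r (leqnn r).
    rewrite A B !subr0 => E2 E1.
    case: (eta r =P 0%N) => Ee; [|by left]; right => Eo.
    rewrite Ee in E1; rewrite Eo in E2. nia.
  + by have [A _] := K_yz eta omega n0 n1 r; rewrite A Hyz /=; have [-> ->] := C3 r (leqnn r).
  + by have [_ A] := K_yz eta omega n0 n1 r; rewrite A Hyz /=; have [-> ->] := C3 r (leqnn r).
  + move=> l _; have [A B] := K_yz eta omega n0 n1 l; rewrite A B Hyz /= -minlt; exact: C5.
Qed.
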